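(* For all $k_1,k_2\in\mathbb{R}$ with $r:=\sqrt{k_1^2+k_2^2}\le1$, $$-\arccos(k_1)-\arccos(k_2)+\arccos(r)+\frac\pi2\le k_1+k_2-r.$$ *)

(* Defs.v *)
From Stdlib Require Import Reals.

(* Main.v *)
Require Import Defs.
From Stdlib Require Import Reals Lra Psatz.
Open Scope R_scope.

Lemma asin_dlim x : -1 < x < 1 -> derivable_pt_lim asin x (1 / sqrt (1 - x²)).
Proof.
  intros H. apply (derive_pt_eq_1 _ _ _ (derivable_pt_asin x H)). apply derive_pt_asin.
Qed.

Lemma asin_nonneg x : 0 <= x -> 0 <= asin x.
Proof.
  intros Hx. destruct (Rlt_or_le (asin x) 0) as [H|H]; [|exact H].
  exfalso. pose proof (asin_bound x). pose proof PI_RGT_0.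
  destruct (Rle_lt_dec x 1) as [Hl|Hl].
  - pose proof (sin_asin x ltac:(lra)).
    pose proof (sin_gt_0 (- asin x) ltac:(lra) ltac:(lra)).
    rewrite sin_neg in H3. lra.
  - unfold asin in H. destruct (Rle_dec x (-1)); [lra|]. destruct (Rle_dec 1 x); lra.
Qed.

Lemma asin_ge_x x : 0 <= x <= 1 -> x <= asin x.
Proof.
  intros Hx. pose proof (asin_nonneg x ltac:(lra)).
  pose proof (sin_asin x ltac:(lra)).
  destruct (Req_dec (asin x) 0) as [E|E].
  - rewrite E, sin_0 in H0. lra.
  - pose proof (sin_lt_x (asin x) ltac:(lra)). lra.
Qed.

Lemma Rdlim y t : 0 < t^2 + y^2 ->
  derivable_pt_lim (fun t => sqrt (t^2 + y^2)) t (t / sqrt (t^2 + y^2)).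
Proof.
  intros H.
  assert (Hi : derivable_pt_lim (fun t => t^2 + y^2) t (2 * t)).
  { replace (2 * t) with (INR 2 * t ^ Init.Nat.pred 2 + 0) by (simpl; ring).
    apply (derivable_pt_lim_plus (fun t => t^2) (fct_cte (y^2))).
    apply derivable_pt_lim_pow. apply derivable_pt_lim_const. }
  pose proof (derivable_pt_lim_comp _ sqrt t _ _ Hi (derivable_pt_lim_sqrt _ H)) as Hc.
  unfold comp in Hc.
  replace (t / sqrt (t^2+y^2)) with (/ (2 * sqrt (t ^ 2 + y ^ 2)) * (2 * t)).
  exact Hc.
  assert (0 < sqrt (t^2+y^2)) by (apply sqrt_lt_R0; lra). field. lra.
Qed.

Lemma key c R p q : 0 < c -> c <= R -> 0 < p -> p <= q -> R^2 + p^2 = 1 -> c^2 + q^2 = 1 ->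
  R * p * (1 - q) <= c * (1 - p) * q.
Proof.
  intros. 
  assert (E1 : R * p * (1 - q) * (1+q) = R * p * c^2) by (replace (c^2) with (1-q^2) by lra; ring).
  assert (E2 : c * (1 - p) * q * (1+p) = c * q * R^2) by (replace (R^2) with (1-p^2) by lra; ring).
  assert (H5 : R * p * c^2 * (1+p) <= c * q * R^2 * (1+q)).
  { assert (F1 : R*p*c^2*(1+p) = (c*R) * (p*c*(1+p))) by ring.
    assert (F2 : c*q*R^2*(1+q) = (c*R) * (q*R*(1+q))) by ring.
    assert (p*c*(1+p) <= q*R*(1+q)).
    { apply Rmult_le_compat; try nra. }
    rewrite F1, F2. apply Rmult_le_compat_l; nra. }
  assert (0 < (1+p)*(1+q)) by nra.
  apply (Rmult_le_reg_r ((1+p)*(1+q))); [lra|].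
  replace (R * p * (1 - q) * ((1 + p) * (1 + q))) with (R * p * (1 - q) * (1+q) * (1+p)) by ring.
  replace (c * (1 - p) * q * ((1 + p) * (1 + q))) with (c * (1 - p) * q * (1+p) * (1+q)) by ring.
  rewrite E1, E2. lra.
Qed.

Lemma interior x y : 0 < x -> 0 < y -> x^2 + y^2 < 1 ->
  asin x - x + (asin y - y) <= asin (sqrt (x^2+y^2)) - sqrt (x^2+y^2).
Proof.
  intros Hx Hy Hxy.
  set (D := fun t => asin (sqrt (t^2+y^2)) - sqrt (t^2+y^2) - (asin t - t)).
  set (D' := fun t => 1 / sqrt (1 - (sqrt (t^2+y^2))²) * (t / sqrt (t^2+y^2))
                       - t / sqrt (t^2+y^2) - (1 / sqrt (1 - t²) - 1)).
  assert (HD : forall c, 0 <= c <= x -> derivable_pt_lim D c (D' c)).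
  { intros c Hc.
    assert (Hpos : 0 < c^2 + y^2) by nra.
    assert (HR0 : 0 < sqrt (c^2+y^2)) by (apply sqrt_lt_R0; lra).
    assert (HR1 : sqrt (c^2+y^2) < 1).
    { rewrite <- sqrt_1. apply sqrt_lt_1; nra. }
    assert (Hc1 : -1 < c < 1) by nra.
    pose proof (Rdlim y c Hpos) as HRd.
    pose proof (derivable_pt_lim_comp _ asin c _ _ HRd (asin_dlim (sqrt (c^2+y^2)) ltac:(lra))) as Ha.
    pose proof (derivable_pt_lim_minus _ _ c _ _ Ha HRd) as H1.
    pose proof (derivable_pt_lim_minus _ _ c _ _ (asin_dlim c Hc1) (derivable_pt_lim_id c)) as H2.
    pose proof (derivable_pt_lim_minus _ _ c _ _ H1 H2) as H3.
    exact H3. }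
  destruct (MVT_cor2 D D' 0 x Hx HD) as [c [Hc Hcr]].
  assert (HD0 : D 0 = asin y - y).
  { unfold D. replace (0^2 + y^2) with (y^2) by ring. rewrite sqrt_pow2 by lra. rewrite asin_0. ring. }
  assert (Hpos : 0 <= D' c).
  { unfold D'.
    assert (Hpos : 0 < c^2 + y^2) by nra.
    assert (HR2 : sqrt (c^2+y^2) ^ 2 = c^2+y^2) by (apply pow2_sqrt; lra).
    set (R := sqrt (c^2+y^2)) in *.
    assert (HR0 : 0 < R) by (apply sqrt_lt_R0; lra).
    assert (HcR : c <= R).
    { unfold R. rewrite <- (sqrt_pow2 c) at 1 by lra. apply sqrt_le_1_alt. nra. }
    assert (Hp2 : sqrt (1 - R²) ^ 2 = 1 - R^2).
    { rewrite pow2_sqrt; unfold Rsqr; nra. }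
    assert (Hq2 : sqrt (1 - c²) ^ 2 = 1 - c^2).
    { rewrite pow2_sqrt; unfold Rsqr; nra. }
    assert (Hp0 : 0 < sqrt (1 - R²)) by (apply sqrt_lt_R0; unfold Rsqr; nra).
    assert (Hpq : sqrt (1 - R²) <= sqrt (1 - c²)) by (apply sqrt_le_1_alt; unfold Rsqr; nra).
    set (p := sqrt (1 - R²)) in *. set (q := sqrt (1 - c²)) in *.
    assert (K := key c R p q ltac:(lra) HcR Hp0 Hpq ltac:(lra) ltac:(lra)).
    replace (1 / p * (c / R) - c / R - (1 / q - 1)) with
      ((c * (1 - p) * q - R * p * (1 - q)) / (R * p * q)) by (field; lra).
    apply Rmult_le_pos; [lra|]. apply Rlt_le, Rinv_0_lt_compat. apply Rmult_lt_0_compat; [nra|lra]. }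
  assert (D x - D 0 >= 0) by (rewrite Hc; nra).
  rewrite HD0 in H. unfold D in H. lra.
Qed.

Lemma boundary x y : 0 <= x -> 0 <= y -> x^2 + y^2 = 1 -> asin x + asin y = PI/2.
Proof.
  intros Hx Hy E.
  assert (Hx1 : x <= 1) by nra.
  assert (Hy' : y = cos (asin x)).
  { rewrite cos_asin by lra. rewrite <- (sqrt_pow2 y) by lra. f_equal. unfold Rsqr. lra. }
  pose proof (asin_nonneg x Hx). pose proof (asin_bound x).
  rewrite Hy', <- sin_shift, asin_sin; lra.
Qed.

Lemma main x y : 0 <= x -> 0 <= y -> x^2 + y^2 <= 1 ->
  asin x - x + (asin y - y) <= asin (sqrt (x^2+y^2)) - sqrt (x^2+y^2).
Proof.
  intros Hx Hy Hxy.
  destruct (Req_dec x 0) as [->|Hx0].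
  { replace (0^2+y^2) with (y^2) by ring. rewrite sqrt_pow2, asin_0 by lra. lra. }
  destruct (Req_dec y 0) as [->|Hy0].
  { replace (x^2+0^2) with (x^2) by ring. rewrite sqrt_pow2, asin_0 by lra. lra. }
  destruct (Req_dec (x^2+y^2) 1) as [E|E].
  { rewrite E, sqrt_1, asin_1. pose proof (boundary x y Hx Hy E). nra. }
  apply interior; lra.
Qed.

Theorem lemmaC6 (k1 k2 : R) :
  sqrt (k1 ^ 2 + k2 ^ 2) <= 1 ->
  - acos k1 - acos k2 + acos (sqrt (k1 ^ 2 + k2 ^ 2)) + PI / 2
    <= k1 + k2 - sqrt (k1 ^ 2 + k2 ^ 2).
Proof.
  intros Hr.
  assert (H2 : sqrt (k1^2+k2^2) ^ 2 = k1^2+k2^2) by (apply pow2_sqrt; nra).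
  pose proof (sqrt_pos (k1^2+k2^2)).
  assert (Hs : k1^2 + k2^2 <= 1) by nra.
  assert (Hk1 : -1 <= k1 <= 1) by nra.
  assert (Hk2 : -1 <= k2 <= 1) by nra.
  rewrite !acos_asin by lra.
  assert (A : forall k, -1 <= k <= 1 -> asin k - k <= asin (Rabs k) - Rabs k).
  { intros k Hk. destruct (Rle_or_lt 0 k).
    - rewrite Rabs_right by lra. lra.
    - rewrite Rabs_left by lra. rewrite asin_opp.
      pose proof (asin_ge_x (-k) ltac:(lra)) as G. rewrite asin_opp in G. lra. }
  pose proof (A k1 Hk1). pose proof (A k2 Hk2).
  pose proof (main (Rabs k1) (Rabs k2) (Rabs_pos _) (Rabs_pos _) ltac:(rewrite !pow2_abs; lra)).
  rewrite !pow2_abs in H3. lra.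
Qed.
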